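(* Let $n\geq 3$ and $m\geq 1$. The matching $\mu$ on the face poset of $\Delta_m^{n,2}$ has no critical cells of dimension $2$.
   Context: $\Delta_m^{n,2}=\mathrm{VR}(\{0,\ldots,m\}^n;2)$, where $\{0,\ldots,m\}^n$ carries the Manhattan metric $d(x,y)=\sum_i|x_i-y_i|$ and $\mathrm{VR}(X;r)$ is the complex of finite subsets of diameter $\leq r$. Order the vertices as $v_1\prec\cdots\prec v_N$ ($N=(m+1)^n$) in the anti-lexicographic order ($x\prec y$ iff at the largest index $i$ with $x_i\neq y_i$, $x_i<y_i$). Let $T_0$ be the set of all simplices of $\Delta_m^{n,2}$, including the empty simplex. For $i=1,\ldots,N$ put $S_i=\{\sigma\in T_{i-1}: v_i\notin\sigma,\ \sigma\cup\{v_i\}\in T_{i-1}\}$, $\mu(\sigma)=\sigma\cup\{v_i\}$ for $\sigma\in S_i$, and $T_i=T_{i-1}\setminus(S_i\cup\{\sigma\cup\{v_i\}:\sigma\in S_i\})$. The critical cells of $\mu$ are the simplices in $T_N$; the dimension of a simplex is its cardinality minus one. *)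

(* Defs.v *)
From mathcomp Require Import all_boot.
Set Implicit Arguments. Unset Strict Implicit. Unset Printing Implicit Defensive.

Definition vtx (n m : nat) : finType := {ffun 'I_n -> 'I_m.+1}.

(* Manhattan metric d(x,y) = sum_i |x_i - y_i|  (|a-b| = (a-b)+(b-a) on nat). *)
Definition manhattan n m (x y : vtx n m) : nat :=
  \sum_(i < n) ((x i - y i) + (y i - x i)).

(* Simplices of VR({0..m}^n; 2): finite subsets of diameter <= 2
   (the empty simplex included). *)
Definition is_simplex n m (s : {set vtx n m}) : bool :=
  [forall x in s, forall y in s, manhattan x y <= 2].

Definition T0 n m : {set {set vtx n m}} := [set s | is_simplex s].

Definition antilex_lt n m (x y : vtx n m) : bool :=
  [exists i : 'I_n, (x i < y i) && [forall j : 'I_n, (i < j) ==> (x j == y j)]].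

Definition antilex_le n m (x y : vtx n m) : bool := (x == y) || antilex_lt x y.

Definition vseq n m : seq (vtx n m) := sort (@antilex_le n m) (enum (vtx n m)).

Definition Sstep n m (T : {set {set vtx n m}}) (v : vtx n m) : {set {set vtx n m}} :=
  [set s in T | (v \notin s) && ((v |: s) \in T)].

Definition step n m (T : {set {set vtx n m}}) (v : vtx n m) : {set {set vtx n m}} :=
  T :\: (Sstep T v :|: [set v |: s | s in Sstep T v]).

Definition critical n m : {set {set vtx n m}} := foldl (@step n m) (T0 n m) (vseq n m).

(* Main.v *)
Require Import Defs.
From mathcomp Require Import all_boot zify.
Set Implicit Arguments. Unset Strict Implicit. Unset Printing Implicit Defensive.

Ltac glia := repeat match goal with |- context [nat_of_ord ?t] => generalize (nat_of_ord t); intro end; lia.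

Section G.
Variables n m : nat.
Local Notation V := (vtx n m).

Lemma manhC (x y : V) : manhattan x y = manhattan y x.
Proof. by apply: eq_bigr => i _; rewrite addnC. Qed.

Lemma manhxx (x : V) : manhattan x x = 0.
Proof. by apply: big1 => i _; rewrite subnn. Qed.

Lemma manh0 (x y : V) : manhattan x y = 0 -> x = y.
Proof.
move=> /eqP; rewrite /manhattan sum_nat_eq0 => /forallP H.
apply/ffunP => i; apply/val_inj => /=; move: (H i) => /=; lia.
Qed.

Lemma manh_tri (x y z : V) : manhattan x z <= manhattan x y + manhattan y z.
Proof.
rewrite /manhattan -big_split /=; apply: leq_sum => i _; lia.
Qed.

Lemma antilex_irr (x : V) : ~~ antilex_lt x x.
Proof.
apply/existsP => -[i /andP[]]; by rewrite ltnn.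
Qed.

Lemma antilex_asym (x y : V) : antilex_lt x y -> ~~ antilex_lt y x.
Proof.
move=> /existsP[i /andP[lt1 /forallP H1]]; apply/existsP => -[j /andP[lt2 /forallP H2]].
case: (ltngtP i j) => [ij|ji|ij].
- by move: (H1 j); rewrite ij /= => /eqP E; move: lt2; rewrite E ltnn.
- by move: (H2 i); rewrite ji /= => /eqP E; move: lt1; rewrite E ltnn.
- have ij' : i = j by apply/val_inj.
  by subst j; move: lt1 lt2; lia.
Qed.

Lemma antilex_le_trans : transitive (@antilex_le n m).
Proof.
move=> y x z /orP[/eqP->//|xy] /orP[/eqP<-|yz]; first by rewrite /antilex_le xy orbT.
apply/orP; right.
move: xy yz => /existsP[i /andP[lt1 /forallP H1]] /existsP[j /andP[lt2 /forallP H2]].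
apply/existsP.
case: (ltngtP i j) => [ij|ji|ij].
- exists j; apply/andP; split.
    by move: (H1 j); rewrite ij /= => /eqP ->.
  apply/forallP => l; apply/implyP => jl.
  move: (H1 l) (H2 l); rewrite jl (ltn_trans ij jl) /= => /eqP -> //.
- exists i; apply/andP; split.
    by move: (H2 i); rewrite ji /= => /eqP <-.
  apply/forallP => l; apply/implyP => il.
  move: (H1 l) (H2 l); rewrite il (ltn_trans ji il) /= => /eqP -> //.
- have ij' : i = j by apply/val_inj.
  subst j; exists i; apply/andP; split; first exact: ltn_trans lt1 lt2.
  apply/forallP => l; apply/implyP => il.
  move: (H1 l) (H2 l); rewrite il /= => /eqP -> //.
Qed.

Lemma antilex_le_refl : reflexive (@antilex_le n m).
Proof. by move=> x; apply/orP; left. Qed.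

Lemma antilex_total : total (@antilex_le n m).
Proof.
move=> x y; rewrite /antilex_le.
case: (eqVneq x y) => [->|xy]; first by apply/orP; left; apply/orP; left.
have [i Hi] : exists i, x i != y i.
  by apply/existsP; apply: contraR xy => /existsPn H; apply/eqP/ffunP => i; apply/eqP; have := H i; rewrite negbK.
pose k := [arg max_(j > i | x j != y j) (j : nat)].
have : (x k != y k) /\ forall j : 'I_n, x j != y j -> (j <= k)%N.
  rewrite /k; case: arg_maxnP => // j H1 H2; split => // l /H2 //.
case=> Hk Hmax.
have above : forall l : 'I_n, (k < l) ==> (x l == y l).
  move=> l; apply/implyP => kl; apply: contraTT kl => /Hmax; rewrite leqNgt //.
rewrite /=.
case: (ltngtP (x k) (y k)) => [lt|gt|e].
- apply/orP; left; apply/existsP; exists k; rewrite lt /=; exact/forallP.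
- apply/orP; right; apply/existsP; exists k; rewrite gt /=; apply/forallP => l.
  by rewrite eq_sym; apply: above.
- by move: Hk; rewrite (val_inj e) eqxx.
Qed.

Definition ad (x y : nat) := (x - y) + (y - x).
Definition med3 x y z := maxn (minn x y) (minn (maxn x y) z).

Lemma manhE (x y : V) : manhattan x y = \sum_(i < n) ad (x i) (y i).
Proof. by []. Qed.

Lemma between (a x u : V) : manhattan a x + manhattan x u <= 4 -> 3 <= manhattan a u ->
  forall i, ad (a i) (x i) + ad (x i) (u i) = ad (a i) (u i).
Proof.
rewrite !manhE => H1 H2 i.
pose E j := ad (a j) (x j) + ad (x j) (u j) - ad (a j) (u j).
have HE : \sum_(j < n) ad (a j) (x j) + \sum_(j < n) ad (x j) (u j)
   = \sum_(j < n) E j + \sum_(j < n) ad (a j) (u j).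
  rewrite -!big_split /=; apply: eq_bigr => j _; rewrite /E /ad; move: (nat_of_ord (a j)) (nat_of_ord (x j)) (nat_of_ord (u j)) => p q r; lia.
have HS : \sum_(j < n) E j <= 1 by lia.
have Ei : E i <= 1.
  apply: leq_trans HS; rewrite (bigD1 i) //=; exact: leq_addr.
move: Ei; rewrite /E /ad; lia.
Qed.

Lemma med_ab x y z : ad (med3 x y z) x + ad (med3 x y z) y = ad x y.
Proof. rewrite /ad /med3; lia. Qed.
Lemma med_ac x y z : ad (med3 x y z) x + ad (med3 x y z) z = ad x z.
Proof. rewrite /ad /med3; lia. Qed.
Lemma med_bc x y z : ad (med3 x y z) y + ad (med3 x y z) z = ad y z.
Proof. rewrite /ad /med3; lia. Qed.
Lemma med_same x y z : y = x -> z = x -> med3 x y z = x.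
Proof. move=> -> ->; rewrite /med3; lia. Qed.
Lemma ad_same x y : ad x y + ad y x = ad x x -> y = x.
Proof. rewrite /ad; lia. Qed.

Lemma geo (a b c u : V) : a != b -> a != c -> b != c ->
  manhattan a b <= 2 -> manhattan a c <= 2 -> manhattan b c <= 2 ->
  manhattan u b <= 2 -> manhattan u c <= 2 -> 2 < manhattan u a ->
  antilex_lt u a ->
  exists w : V, [&& antilex_lt w a, manhattan w a <= 2, manhattan w b <= 2 & manhattan w c <= 2].
Proof.
move=> ab ac bc dab dac dbc dub duc dua /existsP[k /andP[ltk /forallP abv]].
have Bb := @between a b u.
have Bc := @between a c u.
rewrite (manhC u b) in dub; rewrite (manhC u c) in duc; rewrite (manhC u a) in dua.
have {}Bb : forall i, ad (a i) (b i) + ad (b i) (u i) = ad (a i) (u i) by apply: Bb; lia.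
have {}Bc : forall i, ad (a i) (c i) + ad (c i) (u i) = ad (a i) (u i) by apply: Bc; lia.
pose md i := med3 (a i) (b i) (c i).
have mdlt : forall i, md i < m.+1.
  move=> i; have := ltn_ord (a i); have := ltn_ord (b i); have := ltn_ord (c i).
  rewrite /md /med3; lia.
pose wv i := if i == k then minn (md i) (a i - 1) else md i.
have wlt : forall i, wv i < m.+1.
  move=> i; rewrite /wv; case: ifP => _; last exact: mdlt.
  have := mdlt i; lia.
pose w : V := [ffun i => inord (wv i)].
have wE : forall i, (w i : nat) = wv i.
  by move=> i; rewrite /w ffunE inordK.
have bk := Bb k; have ck := Bc k.
have mdk : md k <= a k by move: bk ck; rewrite /md /med3 /ad; lia.
have ak1 : 0 < a k by lia.
pose M (x : V) := \sum_(i < n) ad (md i) (x i).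
have dw : forall x : V, manhattan w x <= M x + 1.
  move=> x; rewrite manhE /M (bigD1 k) //= [X in _ <= X + _](bigD1 k) //=.
  have -> : \sum_(i < n | i != k) ad (w i) (x i) = \sum_(i < n | i != k) ad (md i) (x i).
    by apply: eq_bigr => i /negbTE ik; rewrite wE /wv ik.
  rewrite wE /wv eqxx; move: mdk ak1; rewrite /ad; set S := (X in _ + X <= _); set S2 := (X in _ <= _ + X + _); have -> : S2 = S by []. move: S => S; glia.
have Mab : M a + M b = manhattan a b.
  rewrite manhE /M -big_split; apply: eq_bigr => i _ /=; exact: med_ab.
have Mac : M a + M c = manhattan a c.
  rewrite manhE /M -big_split; apply: eq_bigr => i _ /=; exact: med_ac.
have Mbc : M b + M c = manhattan b c.
  rewrite manhE /M -big_split; apply: eq_bigr => i _ /=; exact: med_bc.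
have Ma : M a <= 1.
  rewrite leqNgt; apply/negP => H.
  have : manhattan b c = 0 by lia.
  by move/manh0 => E; move: bc; rewrite E eqxx.
have Mb : M b <= 1.
  rewrite leqNgt; apply/negP => H.
  have : manhattan a c = 0 by lia.
  by move/manh0 => E; move: ac; rewrite E eqxx.
have Mc : M c <= 1.
  rewrite leqNgt; apply/negP => H.
  have : manhattan a b = 0 by lia.
  by move/manh0 => E; move: ab; rewrite E eqxx.
exists w; apply/and4P; split.
- apply/existsP; exists k; apply/andP; split.
    by rewrite wE /wv eqxx; move: ak1; clear; lia.
  apply/forallP => j; apply/implyP => kj.
  have := abv j; rewrite kj /= => /eqP uj.
  have kj' : j != k by apply: contraTneq kj => ->; rewrite ltnn.
  have := Bb j; have := Bc j; rewrite uj => h1 h2.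
  apply/eqP/val_inj; rewrite /= wE /wv (negbTE kj') /md.
  by apply: med_same; apply: ad_same.
- have := dw a; lia.
- have := dw b; lia.
- have := dw c; lia.
Qed.
End G.

Section Main.
Variables n m : nat.
Local Notation V := (vtx n m).
Local Notation vs := (vseq n m).
Definition x0 : V := [ffun => ord0].
Definition Tpre j := foldl (@step n m) (T0 n m) (take j vs).

Lemma step_sub (T : {set {set V}}) (v : V) : step T v \subset T.
Proof. exact: subsetDl. Qed.

Lemma foldl_sub (T : {set {set V}}) s : foldl (@step n m) T s \subset T.
Proof.
elim: s T => [|v s IH] T /=; first exact: subxx.
exact: subset_trans (IH _) (step_sub _ _).
Qed.

Lemma Tpre_sub j : Tpre j \subset T0 n m.
Proof. exact: foldl_sub. Qed.

Lemma TpreS j : j < size vs -> Tpre j.+1 = step (Tpre j) (nth x0 vs j).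
Proof. by move=> H; rewrite /Tpre (take_nth x0 H) foldl_rcons. Qed.

Lemma crit_sub j : critical n m \subset Tpre j.
Proof.
by rewrite /critical -(cat_take_drop j vs) foldl_cat; apply: foldl_sub.
Qed.

Lemma in_T0 (s : {set V}) x y : s \in T0 n m -> x \in s -> y \in s -> manhattan x y <= 2.
Proof.
rewrite inE => /forallP H xs ys; have := H x; rewrite xs /= => /forallP H2.
by have := H2 y; rewrite ys.
Qed.

Lemma sub_T0 (s t : {set V}) : s \in T0 n m -> t \subset s -> t \in T0 n m.
Proof.
move=> Hs ts; rewrite inE; apply/forallP => x; apply/implyP => xt.
apply/forallP => y; apply/implyP => yt; apply: (in_T0 Hs); exact: (subsetP ts).
Qed.

Lemma add_T0 (s : {set V}) u : s \in T0 n m -> (forall y, y \in s -> manhattan u y <= 2) ->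
  u |: s \in T0 n m.
Proof.
move=> Hs Hu; rewrite inE; apply/forallP => x; apply/implyP => /setU1P [->|xs];
  apply/forallP => y; apply/implyP => /setU1P [->|ys].
- by rewrite manhxx.
- exact: Hu.
- by rewrite manhC; apply: Hu.
- exact: in_T0 Hs xs ys.
Qed.

Lemma setU1_in (v : V) (s : {set V}) : v \in s -> v |: s = s.
Proof. by move=> vs'; apply/setUidPr; rewrite sub1set. Qed.

Lemma lemmaA (s : {set V}) k : s \in T0 n m -> k <= size vs ->
  (forall j, j < k -> nth x0 vs j |: s \notin T0 n m) -> s \in Tpre k.
Proof.
move=> sT; elim: k => [|k IH] kle H; first by rewrite /Tpre take0.
have sk : s \in Tpre k by apply: IH => [|j jk]; [exact: ltnW | apply: H; exact: ltnW].
rewrite TpreS // /step inE sk andbT inE negb_or; apply/andP; split.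
  rewrite inE sk /=; apply/negP => /andP[_ /(subsetP (Tpre_sub k))].
  by apply/negP; apply: H.
apply/imsetP => -[t _ E].
have : nth x0 vs k \in s by rewrite E setU11.
move=> /setU1_in E2; move: (H k (ltnSn k)); by rewrite E2 sT.
Qed.

Lemma vs_sorted : sorted (@antilex_le n m) vs.
Proof. exact: sort_sorted (@antilex_total n m) _. Qed.

Lemma vs_le i j : i <= j -> j < size vs -> antilex_le (nth x0 vs i) (nth x0 vs j).
Proof.
move=> ij js.
apply: (sorted_leq_nth (@antilex_le_trans n m) (@antilex_le_refl n m) x0 vs_sorted) => //.
  by rewrite inE; apply: leq_ltn_trans ij js.
Qed.

Lemma in_vs (x : V) : x \in vs.
Proof. by rewrite /vseq mem_sort mem_enum. Qed.


Lemma no_tri (s : {set V}) : s \in critical n m -> #|s| != 3.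
Proof.
move=> Hc; apply/negP => /eqP c3.
have sT : s \in T0 n m by move: (subsetP (crit_sub 0) _ Hc); rewrite /Tpre take0.
have exA : exists j, (j < size vs) && (nth x0 vs j |: s \in T0 n m).
  have [a aS] : exists a, a \in s by apply/set0Pn; rewrite -card_gt0 c3.
  exists (index a vs); rewrite index_mem in_vs nth_index ?in_vs //= setU1_in //.
case: (ex_minnP exA) => j0 /andP[j0lt touch0] minj.
set v := nth x0 vs j0 in touch0.
have notouch : forall j, j < j0 -> nth x0 vs j |: s \notin T0 n m.
  move=> j jj; apply/negP => H.
  have := minj j; rewrite H andbT (ltn_trans jj j0lt) => /(_ isT).
  by rewrite leqNgt jj.
have sPre : s \in Tpre j0 by apply: lemmaA => //; exact: ltnW.
apply/negP: (subsetP (crit_sub j0.+1) _ Hc).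
rewrite TpreS // /step inE negb_and negbK; apply/orP; left.
case vS: (v \in s).
-
  apply/setUP; right; apply/imsetP; exists (s :\ v); last by rewrite setD1K.
  have sdT : s :\ v \in T0 n m by apply: sub_T0 sT _; exact: subsetDl.
  have sdPre : s :\ v \in Tpre j0.
    apply: lemmaA => //; first exact: ltnW.
    move=> j jj; apply/negP => Hu.
    set u := nth x0 vs j in Hu.
    have nu := notouch j jj.
    have c2 : #|s :\ v| == 2 by move: c3; rewrite (cardsD1 v) vS add1n => -[->].
    move/cards2P: c2 => [b [c [bc Ebc]]].
    have bS : b \in s :\ v by rewrite Ebc !inE eqxx.
    have cS : c \in s :\ v by rewrite Ebc !inE eqxx orbT.
    move: (bS) (cS); rewrite !inE => /andP[bv bS'] /andP[cv cS'].
    have inS : forall y, y \in s -> (y == v) || (y == b) || (y == c).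
      move=> y yS; case: (eqVneq y v) => //= yv.
      have : y \in s :\ v by rewrite !inE yv.
      by rewrite Ebc !inE.
    have dub : manhattan u b <= 2 by apply: (in_T0 Hu); [exact: setU11 | by apply/setU1P; right].
    have duc : manhattan u c <= 2 by apply: (in_T0 Hu); [exact: setU11 | by apply/setU1P; right].
    have dvb : manhattan v b <= 2 by apply: (in_T0 sT).
    have dvc : manhattan v c <= 2 by apply: (in_T0 sT).
    have dbc : manhattan b c <= 2 by apply: (in_T0 sT).
    have duv : 2 < manhattan u v.
      rewrite ltnNge; apply/negP => duv; move/negP: nu; apply; apply: add_T0 => // y /inS.
      by case/orP => [/orP[]|] /eqP ->.
    have ltuv : antilex_lt u v.
      have := vs_le (ltnW jj) j0lt; rewrite /antilex_le -/u -/v => /orP[/eqP E|//].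
      by move: duv; rewrite E manhxx.
    have [w /and4P[ltw dwv dwb dwc]] :=
      geo (negbT (introF eqP (fun E => (negP bv) (introT eqP (esym E))))) (negbT (introF eqP (fun E => (negP cv) (introT eqP (esym E))))) bc dvb dvc dbc dub duc duv ltuv.
    have tw : w |: s \in T0 n m.
      apply: add_T0 => // y /inS; by case/orP => [/orP[]|] /eqP ->.
    have := minj (index w vs); rewrite index_mem in_vs nth_index ?in_vs // tw => /(_ isT) le.
    have iw : index w vs < size vs by rewrite index_mem in_vs.
    have := vs_le le iw; rewrite nth_index ?in_vs // -/v /antilex_le => /orP[/eqP E| H].
    - by move: ltw; rewrite -E (negbTE (antilex_irr v)).
    - by move: (antilex_asym ltw); rewrite H.
  rewrite inE sdPre !inE eqxx /= setD1K //.
-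
  apply/setUP; left; rewrite inE sPre vS /=.
  apply: lemmaA => //; first exact: ltnW.
  move=> j jj; apply: contra (notouch j jj) => H; apply: sub_T0 H _.
  by apply: setUS; exact: subsetUr.
Qed.
End Main.

Theorem lemma4p9 (n m : nat) (hn : 3 <= n) (hm : 1 <= m)
  (s : {set vtx n m}) : s \in critical n m -> #|s| != 3.
Proof. exact: no_tri. Qed.
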